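(* Let $U=u_1\cdots u_n$ be a finite word and $\lambda\in\Lambda(U)$. Then for every letter $a\ne u_{n-\lambda+1}$, the word $u_{n-\lambda+2}^{n}\,a$ (of length $\lambda$) is not a factor of $U$.
   Context: $u_i^j=u_i\cdots u_j$ (empty if $j<i$), and $\Lambda(U)=\{1\le k<n:\ u_i=u_{i+k}\text{ for all }1\le i\le n-k\}$. *)

(* Defs.v *)
From mathcomp Require Import all_boot.
Set Implicit Arguments. Unset Strict Implicit. Unset Printing Implicit Defensive.

(* Words are sequences over an eqType alphabet T, indexed from 0 in Rocq:
   the paper's letter u_i (1 <= i <= n) is [nth x0 U (i-1)]. *)

(* k \in Lambda(U):  1 <= k < n  and  u_i = u_{i+k} for all 1 <= i <= n-k.
   The default letter of nth is irrelevant since all indices are in range. *)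
Definition Lambda (T : eqType) (U : seq T) (k : nat) : Prop :=
  (1 <= k < size U) /\
  (forall (x0 : T) (i : nat), i + k < size U -> nth x0 U i = nth x0 U (i + k)).

Definition factor (T : eqType) (V U : seq T) : bool := infix V U.

(* Main.v *)
Require Import Defs.
From mathcomp Require Import all_boot zify.

Lemma win_step (T : eqType) (U : seq T) (lam p : nat) :
  Lambda U lam -> p + lam < size U ->
  perm_eq (take lam (drop p U)) (take lam (drop p.+1 U)).
Proof.
move=> [/andP [lam1 _] per] hp.
have hx : p < size U by apply: leq_ltn_trans hp; exact: leq_addr.
case: U hx hp per => [|x0 U'] // hx hp per.
set U := x0 :: U'.
case: lam lam1 hp per => [|l] // _ hp per.
rewrite (drop_nth x0 hx) /=.
have hl : l < size (drop p.+1 U) by rewrite size_drop; rewrite addnS in hp; rewrite ltn_subRL addSn.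
rewrite (take_nth x0 hl) nth_drop.
rewrite (per x0 p hp) -perm_rcons.
by rewrite addSn -addnS.
Qed.

Lemma win_all (T : eqType) (U : seq T) (lam : nat) :
  Lambda U lam -> forall d p, p + d = size U - lam ->
  perm_eq (take lam (drop p U)) (take lam (drop (size U - lam) U)).
Proof.
move=> hL; elim=> [|d IH] p hp.
  by rewrite -hp addn0.
have h1 : p + lam < size U.
  case: hL => /andP [_ hl] _.
  have : p < size U - lam by rewrite -hp addnS ltnS leq_addr.
  by rewrite ltn_subRL addnC.
have h2 : p.+1 + d = size U - lam by rewrite addSn -addnS.
exact: perm_trans (@win_step _ U lam p hL h1) (IH p.+1 h2).
Qed.

Theorem lemma5p3 (T : eqType) (U : seq T) (lam : nat) (a : T) :
  Lambda U lam ->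
  a != nth a U (size U - lam) ->
  ~~ factor (drop (size U - lam + 1) U ++ [:: a]) U.
Proof.
move=> hL hne; apply/negP => /infixP [X [Y hU]].
have [/andP [lam1 lamn] _] := hL.
set V := drop (size U - lam + 1) U ++ [:: a].
have sV : size V = lam.
  rewrite /V size_cat size_drop /= subnDA subKn ?(ltnW lamn) //.
  by rewrite subn1 addn1 prednK.
have {}hU : U = X ++ V ++ Y by [].
have hVd : V = drop (size U - lam + 1) U ++ [:: a] by []. clearbody V.
have hsz : size X + lam + size Y = size U by rewrite hU !size_cat sV addnA.
have hw : take lam (drop (size X) U) = V.
  by rewrite hU drop_size_cat // -sV take_size_cat.
have hd : size X + (size U - lam - size X) = size U - lam.
  rewrite subnKC //. rewrite -hsz; lia.
have := @win_all _ U lam hL _ _ hd; rewrite hw.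
have hS : size U - lam < size U by rewrite ltn_subLR ?(ltnW lamn) // -{1}[size U]add0n ltn_add2r.
rewrite take_oversize; last by rewrite size_drop subKn ?(ltnW lamn).
rewrite (drop_nth a hS) hVd cats1 perm_rcons addn1 => hp.
have := permP hp (pred1 a); rewrite /= eqxx => /eqP.
rewrite eqn_add2r => /eqP h.
move: hne; rewrite eq_sym.
by case: (nth a U (size U - lam) == a) h.
Qed.
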